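(* Let $m\geq 2$ and let $\lambda:\mathbb{R}^{2m}\to\mathbb{R}$ be a function satisfying $\lambda(\alpha\zeta)=\alpha\lambda(\zeta)$ for all $\alpha\in\mathbb{R}$, $\zeta\in\mathbb{R}^{2m}$, and $\lambda(\zeta_1+\zeta_2)=\lambda(\zeta_1)+\lambda(\zeta_2)$ for all $\zeta_1,\zeta_2\in\mathbb{R}^{2m}$ with $[\zeta_1,\zeta_2]=0$. Then $\lambda$ is a linear functional.
   Context: For $u,v\in\mathbb{R}^{2m}$, $[u,v]:=u^T\omega v$ where $\omega=\begin{pmatrix}0&-\mathbb{1}_m\\ \mathbb{1}_m&0\end{pmatrix}$ is the standard symplectic form. *)

(* Defs.v *)
From mathcomp Require Import all_boot all_order all_algebra.
From mathcomp Require Import Rstruct.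
Notation R := Rdefinitions.R.
Set Implicit Arguments. Unset Strict Implicit. Unset Printing Implicit Defensive.
Import GRing.Theory Num.Theory.
Local Open Scope ring_scope.

Definition omega (m : nat) : 'M[R]_(m + m) :=
  block_mx 0 (- 1%:M) 1%:M 0.

Definition symp (m : nat) (u v : 'cV[R]_(m + m)) : R :=
  (u^T *m omega m *m v) ord0 ord0.

(* Main.v *)
Require Import Defs.
From mathcomp Require Import all_boot all_order all_algebra.
From mathcomp Require Import Rstruct.
From mathcomp Require Import lra.
Import GRing.Theory Num.Theory.
Local Open Scope ring_scope.

Section S.
Variable m : nat.
Local Notation V := ('cV[R]_(m + m)).

Definition bb (k : 'I_(m + m)) : V := delta_mx k 0.

Lemma symp_addl (u v w : V) : symp (u + v) w = symp u w + symp v w.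
Proof. by rewrite /symp linearD /= !mulmxDl mxE. Qed.
Lemma symp_addr (u v w : V) : symp u (v + w) = symp u v + symp u w.
Proof. by rewrite /symp !mulmxDr mxE. Qed.
Lemma symp_scalel a (u w : V) : symp (a *: u) w = a * symp u w.
Proof. by rewrite /symp linearZ /= -!scalemxAl mxE. Qed.
Lemma symp_scaler a (u w : V) : symp u (a *: w) = a * symp u w.
Proof. by rewrite /symp -!scalemxAr mxE. Qed.
Lemma symp_bb k l : symp (bb k) (bb l) = omega m k l.
Proof.
by rewrite /symp /bb trmx_delta -rowE -colE !mxE.
Qed.

Lemma oLL i j : omega m (lshift m i) (lshift m j) = 0.
Proof. by rewrite /omega block_mxEul mxE. Qed.
Lemma oRR i j : omega m (rshift m i) (rshift m j) = 0.
Proof. by rewrite /omega block_mxEdr mxE. Qed.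
Lemma oLR i j : omega m (lshift m i) (rshift m j) = - (i == j)%:R.
Proof. by rewrite /omega block_mxEur !mxE. Qed.
Lemma oRL i j : omega m (rshift m i) (lshift m j) = (i == j)%:R.
Proof. by rewrite /omega block_mxEdl !mxE. Qed.


Lemma key (lam : V -> R)
  (hhom : forall (a : R) (z : V), lam (a *: z) = a * lam z)
  (hadd : forall z1 z2 : V, symp z1 z2 = 0 -> lam (z1 + z2) = lam z1 + lam z2)
  (x y e f : V) :
  symp x e = 0 -> symp x f = 0 -> symp e y = 0 -> symp y e = 0 -> symp y f = 0 ->
  symp x y + symp e f = 0 -> lam (x + y) = lam x + lam y.
Proof.
move=> hxe hxf hey hye hyf hs.
have hN : forall z : V, lam (- z) = - lam z.
  by move=> z; rewrite -(scaleN1r z) hhom mulN1r.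
have hsN : forall u v : V, symp (- u) v = - symp u v.
  by move=> u v; rewrite -(scaleN1r u) symp_scalel mulN1r.
have hsNr : forall u v : V, symp u (- v) = - symp u v.
  by move=> u v; rewrite -(scaleN1r v) symp_scaler mulN1r.
have A : lam ((x + e) + (y + f)) = lam x + lam e + (lam y + lam f).
  rewrite hadd ?hadd //; rewrite ?symp_addl ?symp_addr hxf hey addr0 add0r. exact: hs.
have B : lam ((x + y) + (e + f)) = lam (x + y) + lam (e + f).
  by rewrite hadd // ?symp_addl ?symp_addr hxe hxf hye hyf !addr0.
have C : lam ((- x + e) + (- y + f)) = - lam x + lam e + (- lam y + lam f).
  rewrite hadd ?hadd ?hN //; rewrite ?symp_addl ?symp_addr ?hsN ?hsNr ?opprK;
  rewrite ?hxe ?hxf ?hey ?hye ?hyf ?oppr0 ?addr0 ?add0r ?subr0 //.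
have D : lam (- (x + y) + (e + f)) = - lam (x + y) + lam (e + f).
  rewrite (hadd (- (x + y)) (e + f)) ?hN // hsN !symp_addl !symp_addr hxe hxf hye hyf !addr0 oppr0 //.
have E1 : (x + e) + (y + f) = (x + y) + (e + f) by rewrite addrACA.
have E2 : (- x + e) + (- y + f) = - (x + y) + (e + f) by rewrite addrACA opprD.
rewrite E1 B in A; rewrite E2 D in C.
lra.
Qed.

Ltac ssimp := rewrite ?symp_addl ?symp_addr ?symp_scalel ?symp_scaler ?symp_bb
   ?oLL ?oRR ?oLR ?oRL.

Lemma plane (lam : V -> R) (hm : (2 <= m)%N)
  (hhom : forall (a : R) (z : V), lam (a *: z) = a * lam z)
  (hadd : forall z1 z2 : V, symp z1 z2 = 0 -> lam (z1 + z2) = lam z1 + lam z2)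
  (i : 'I_m) (p q : R) :
  lam (p *: bb (lshift m i) + q *: bb (rshift m i)) =
  p * lam (bb (lshift m i)) + q * lam (bb (rshift m i)).
Proof.
have [j hji] : exists j : 'I_m, j != i.
  have h0 : (0 < m)%N by apply: leq_trans hm.
  have h1 : (1 < m)%N by [].
  case: (eqVneq (Ordinal h0) i) => [<-|h]; last by exists (Ordinal h0).
  by exists (Ordinal h1).
have hij : (i == j) = false by rewrite eq_sym; apply/negbTE.
rewrite (@key lam hhom hadd _ _ (bb (lshift m j)) ((- (p * q)) *: bb (rshift m j))) ?hhom //;
  ssimp; rewrite ?hij ?(negbTE hji) ?eqxx /=; lra.
Qed.

Definition Q (i : 'I_m) (z : V) : V :=
  z (lshift m i) 0 *: bb (lshift m i) + z (rshift m i) 0 *: bb (rshift m i).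

Lemma decomp (z : V) : z = \sum_(i < m) Q i z.
Proof.
rewrite {1}(matrix_sum_delta z).
rewrite (eq_bigr (fun k => z k 0 *: bb k)); last first.
  by move=> k _; rewrite big_ord1.
rewrite big_split_ord /Q big_split; reflexivity.
Qed.

Lemma orthQ (z : V) (a : 'I_m) (s : seq 'I_m) :
  a \notin s -> symp (Q a z) (\sum_(i <- s) Q i z) = 0.
Proof.
elim: s => [|b s IH]; first by rewrite big_nil -(scale0r (0 : V)) symp_scaler mul0r.
rewrite in_cons negb_or => /andP [hab hs].
rewrite big_cons symp_addr IH // addr0 /Q.
ssimp; rewrite (negbTE hab) /=; lra.
Qed.

Lemma sumQ (lam : V -> R)
  (hhom : forall (a : R) (z : V), lam (a *: z) = a * lam z)
  (hadd : forall z1 z2 : V, symp z1 z2 = 0 -> lam (z1 + z2) = lam z1 + lam z2)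
  (z : V) (s : seq 'I_m) :
  uniq s -> lam (\sum_(i <- s) Q i z) = \sum_(i <- s) lam (Q i z).
Proof.
elim: s => [|b s IH].
  by rewrite !big_nil => _; rewrite -(scale0r (0 : V)) hhom mul0r.
rewrite cons_uniq => /andP [hb hs].
by rewrite !big_cons hadd ?orthQ // IH.
Qed.

Lemma lam_formula (lam : V -> R) (hm : (2 <= m)%N)
  (hhom : forall (a : R) (z : V), lam (a *: z) = a * lam z)
  (hadd : forall z1 z2 : V, symp z1 z2 = 0 -> lam (z1 + z2) = lam z1 + lam z2)
  (z : V) :
  lam z = \sum_(i < m) (z (lshift m i) 0 * lam (bb (lshift m i))
                       + z (rshift m i) 0 * lam (bb (rshift m i))).
Proof.
rewrite {1}(decomp z) sumQ ?index_enum_uniq //.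
by apply: eq_bigr => i _; rewrite /Q plane.
Qed.
End S.

Theorem lemma1 (m : nat) (hm : (2 <= m)%N) (lam : 'cV[R]_(m + m) -> R)
  (hhom : forall (a : R) (z : 'cV[R]_(m + m)), lam (a *: z) = a * lam z)
  (hadd : forall z1 z2 : 'cV[R]_(m + m), symp z1 z2 = 0 ->
            lam (z1 + z2) = lam z1 + lam z2) :
  forall (a : R) (x y : 'cV[R]_(m + m)), lam (a *: x + y) = a * lam x + lam y.
Proof.
move=> a x y.
rewrite !(@lam_formula m lam hm hhom hadd) mulr_sumr -big_split /=.
apply: eq_bigr => i _; rewrite !mxE.
lra.
Qed.
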